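(* (a) Let $n=1$ and let $m,\hat m\in A_1$ be monomials with multi-degrees $(r,s)$ and $(\hat r,\hat s)$. (a1) If $[m,\hat m]=0$ then $s\hat r=r\hat s$. (a2) If $\hat r=\hat s\neq0$ and $[m,\hat m]=0$, then $r=s$. (b) Let $m,\hat m\in A_n$ be monomials with multi-degrees $(\alpha,\beta)$ and $(\hat\alpha,\hat\beta)$. (b1) If $[m,\hat m]=0$ then $\beta_j\hat\alpha_j=\alpha_j\hat\beta_j$ for all $j\in\{1,\dots,n\}$. (b2) If $\hat\alpha=\hat\beta$ and $[m,\hat m]=0$, then $\alpha_j=\beta_j$ for every index $j$ with $\hat\alpha_j\neq0$. (c) Let $m,\tilde m\in A_n$ be monomials with multi-degrees $(\alpha,\beta)$ and $(\tilde\alpha,\tilde\alpha)$. Then $[m,\tilde m]=0$ if and only if $\alpha_j=\beta_j$ for every index $j$ with $\tilde\alpha_j\neq0$.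
   Context: Fix $n\ge 1$. The Weyl algebra $A_n$ is the unital associative $\mathbb{C}$-algebra generated by $a_1,\dots,a_n,a_1^\dagger,\dots,a_n^\dagger$ subject to $[a_i,a_j^\dagger]=\delta_{ij}$ and $[a_i,a_j]=[a_i^\dagger,a_j^\dagger]=0$, where $[x,y]=xy-yx$. A monomial is a finite product (in any order) of the generators $a_j,a_j^\dagger$; its multi-degree $\mathrm{mdeg}(m)=(\alpha,\beta)\in\mathbb N_0^{2n}$ records the number $\alpha_j$ of factors $a_j^\dagger$ and the number $\beta_j$ of factors $a_j$. *)

(* Defs.v *)
(* The Weyl algebra A_n over the complex numbers, defined
   literally as the free algebra on a_1..a_n, a_1^+..a_n^+ modulo the
   two-sided ideal generated by the canonical commutation relations. *)
From HB Require Import structures.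
From mathcomp Require Import all_boot all_order all_algebra.
From mathcomp Require Import complex.
From mathcomp Require Import Rstruct.
Set Implicit Arguments. Unset Strict Implicit. Unset Printing Implicit Defensive.
Import Order.TTheory GRing.Theory Num.Theory.
Local Open Scope ring_scope.

Definition CC : Type := complex Rdefinitions.R.

(* Generators of A_n: inl j = a_j (annihilator), inr j = a_j^dagger. *)
Definition gen (n : nat) : Type := ('I_n + 'I_n)%type.
Definition ann {n} (j : 'I_n) : gen n := inl j.
Definition cre {n} (j : 'I_n) : gen n := inr j.

(* Monomials = finite words in the generators (product in the given order). *)
Definition word (n : nat) : Type := seq (gen n).

Definition mdeg_alpha {n} (m : word n) (j : 'I_n) : nat := count (pred1 (cre j)) m.
Definition mdeg_beta {n} (m : word n) (j : 'I_n) : nat := count (pred1 (ann j)) m.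

(* Elements of the free algebra C<gens>, as formal finite linear combinations
   of words; two formal sums denote the same element iff they have the same
   coefficient function. *)
Definition fsum (n : nat) : Type := seq (CC * word n).
Definition coef {n} (p : fsum n) (w : word n) : CC :=
  \sum_(x <- p | x.2 == w) x.1.
Definition fscale {n} (c : CC) (p : fsum n) : fsum n :=
  [seq (c * x.1, x.2) | x <- p].
Definition sandwich {n} (u : word n) (p : fsum n) (v : word n) : fsum n :=
  [seq (x.1, u ++ x.2 ++ v) | x <- p].

Definition weyl_rel {n} (r : fsum n) : Prop :=
  exists i j : 'I_n,
    r = [:: (1, [:: ann i; cre j]); (-1, [:: cre j; ann i]);
            (- (if i == j then 1 else 0), [::])]
 \/ r = [:: (1, [:: ann i; ann j]); (-1, [:: ann j; ann i])]
 \/ r = [:: (1, [:: cre i; cre j]); (-1, [:: cre j; cre i])].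

Inductive in_ideal {n} : fsum n -> Prop :=
| ideal_nil : in_ideal [::]
| ideal_gen c u r v : weyl_rel r -> in_ideal (fscale c (sandwich u r v))
| ideal_add p q : in_ideal p -> in_ideal q -> in_ideal (p ++ q)
| ideal_ext p q : coef p =1 coef q -> in_ideal p -> in_ideal q.

Definition weyl_eq {n} (p q : fsum n) : Prop := in_ideal (p ++ fscale (-1) q).

Definition weyl_commute {n} (m m' : word n) : Prop :=
  weyl_eq [:: (1, m ++ m')] [:: (1, m' ++ m)].

(* Main.v *)
Require Import Defs.
From HB Require Import structures.
From mathcomp Require Import all_boot all_order all_algebra.
From mathcomp Require Import complex ring Rstruct zify.
From Stdlib Require Import Classical.
Set Implicit Arguments. Unset Strict Implicit. Unset Printing Implicit Defensive.
Import Order.TTheory GRing.Theory Num.Theory.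
Local Open Scope ring_scope.
HB.instance Definition _ := Num.ClosedField.copy CC (complex Rdefinitions.R).

Lemma cf_cat n (p q : fsum n) w : coef (p ++ q) w = coef p w + coef q w.
Proof. by rewrite /coef big_cat. Qed.
Lemma cf_nil n w : coef ([::] : fsum n) w = 0.
Proof. by rewrite /coef big_nil. Qed.
Lemma cf_cons n c u (p : fsum n) w :
  coef ((c,u)::p) w = (if u == w then c else 0) + coef p w.
Proof. by rewrite /coef big_cons /=; case: ifP => _ //; rewrite add0r. Qed.
Lemma cf_scale n c (p : fsum n) w : coef (fscale c p) w = c * coef p w.
Proof. by rewrite /coef /fscale big_map /= big_distrr. Qed.

Lemma ideal_scale n c (p : fsum n) : in_ideal p -> in_ideal (fscale c p).
Proof.
elim=> [|c' u r v Hr|p' q' _ IH1 _ IH2|p' q' Hc _ IH].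
- exact: ideal_nil.
- have -> : fscale c (fscale c' (sandwich u r v)) = fscale (c*c') (sandwich u r v).
    by rewrite /fscale -map_comp; apply: eq_map => x /=; rewrite mulrA.
  exact: ideal_gen.
- rewrite /fscale map_cat. exact: ideal_add.
- by apply: ideal_ext IH => w; rewrite !cf_scale Hc.
Qed.

Lemma cf_map_inj n (f : word n -> word n) (p q : fsum n) :
  injective f -> coef p =1 coef q ->
  coef [seq (x.1, f x.2) | x <- p] =1 coef [seq (x.1, f x.2) | x <- q].
Proof.
move=> inj H w; rewrite /coef !big_map /=.
case: (classic (exists w', f w' = w)) => [[w' <-]|Hn].
- have E r : \sum_(x <- r | f x.2 == f w') x.1 = \sum_(x <- r | x.2 == w') x.1.
    by apply: eq_bigl => x; rewrite inj_eq.
  by rewrite !E; apply: H.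
- rewrite !big_pred0 // => x; apply/negP => /eqP E; apply: Hn; by exists x.2.
Qed.

Lemma ideal_sand n (u v : word n) p : in_ideal p -> in_ideal (sandwich u p v).
Proof.
elim=> [|c' u' r v' Hr|p' q' _ IH1 _ IH2|p' q' Hc _ IH].
- exact: ideal_nil.
- have -> : sandwich u (fscale c' (sandwich u' r v')) v
            = fscale c' (sandwich (u ++ u') r (v' ++ v)).
    by rewrite /fscale /sandwich -!map_comp; apply: eq_map => x /=; rewrite !catA.
  exact: ideal_gen.
- rewrite /sandwich map_cat. exact: ideal_add.
- have inj : injective (fun w => u ++ w ++ v).
    move=> x y /= E.
    have Hs : size x = size y.
      by move/(congr1 size): E; rewrite !size_cat => /eqP; rewrite eqn_add2l eqn_add2r => /eqP.
    move/eqP: E; rewrite eqseq_cat // => /andP[_].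
    by rewrite eqseq_cat // => /andP[/eqP].
  apply: ideal_ext IH; exact: (cf_map_inj inj Hc).
Qed.

Lemma ideal_coef0 n (p : fsum n) : (forall w, coef p w = 0) -> in_ideal p.
Proof. move=> H; apply: ideal_ext ideal_nil => w; by rewrite cf_nil H. Qed.

Lemma weq_coef n (p q : fsum n) : coef p =1 coef q -> weyl_eq p q.
Proof.
move=> H; apply: ideal_coef0 => w; rewrite cf_cat cf_scale H; ring.
Qed.
Lemma weq_refl n (p : fsum n) : weyl_eq p p.
Proof. exact: weq_coef. Qed.
Lemma weq_sym n (p q : fsum n) : weyl_eq p q -> weyl_eq q p.
Proof.
move/(ideal_scale (-1)); apply: ideal_ext => w.
rewrite !(cf_cat, cf_scale); ring.
Qed.
Lemma weq_trans n (p q r : fsum n) : weyl_eq p q -> weyl_eq q r -> weyl_eq p r.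
Proof.
move=> H1 H2; have:= ideal_add H1 H2; apply: ideal_ext => w.
rewrite !(cf_cat, cf_scale); ring.
Qed.
Lemma weq_cat n (p q p' q' : fsum n) :
  weyl_eq p q -> weyl_eq p' q' -> weyl_eq (p ++ p') (q ++ q').
Proof.
move=> H1 H2; have:= ideal_add H1 H2; apply: ideal_ext => w.
rewrite !(cf_cat, cf_scale); ring.
Qed.
Lemma weq_scale n c (p q : fsum n) : weyl_eq p q -> weyl_eq (fscale c p) (fscale c q).
Proof.
move/(ideal_scale c); apply: ideal_ext => w.
rewrite !(cf_cat, cf_scale); ring.
Qed.
Lemma weq_sand n (u v : word n) (p q : fsum n) :
  weyl_eq p q -> weyl_eq (sandwich u p v) (sandwich u q v).
Proof.
move/(ideal_sand u v); rewrite /weyl_eq /sandwich /fscale !map_cat -!map_comp.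
congr in_ideal; congr (_ ++ _); apply: eq_map => x //.
Qed.

Definition cs {n} (x y : gen n) : CC :=
  match x, y with
  | inl i, inr j => if i == j then 1 else 0
  | inr j, inl i => if i == j then -1 else 0
  | _, _ => 0 end.

Lemma swap n (p v : word n) x y :
  weyl_eq [:: (1, p ++ x :: y :: v)] [:: (1, p ++ y :: x :: v); (cs x y, p ++ v)].
Proof.
case: x => i; case: y => j.
- have H : in_ideal (fscale 1 (sandwich p [:: (1, [:: ann i; ann j]); (-1, [:: ann j; ann i])] v)).
    by apply: ideal_gen; exists i, j; right; left.
  apply: ideal_ext H => w; rewrite /fscale /sandwich /ann /cs /=.
  rewrite !cf_cons !cf_nil; do ! case: ifP => _; ring.
- have H : in_ideal (fscale 1 (sandwich p [:: (1, [:: ann i; cre j]); (-1, [:: cre j; ann i]);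
            (- (if i == j then 1 else 0), [::])] v)).
    by apply: ideal_gen; exists i, j; left.
  apply: ideal_ext H => w; rewrite /fscale /sandwich /ann /cre /cs /=.
  rewrite !cf_cons !cf_nil; do ! case: ifP => _; ring.
- have H : in_ideal (fscale (-1) (sandwich p [:: (1, [:: ann j; cre i]); (-1, [:: cre i; ann j]);
            (- (if j == i then 1 else 0), [::])] v)).
    by apply: ideal_gen; exists j, i; left.
  apply: ideal_ext H => w; rewrite /fscale /sandwich /ann /cre /cs /=.
  rewrite !cf_cons !cf_nil; do ! case: ifP => _; ring.
- have H : in_ideal (fscale 1 (sandwich p [:: (1, [:: cre i; cre j]); (-1, [:: cre j; cre i])] v)).
    by apply: ideal_gen; exists i, j; right; right.
  apply: ideal_ext H => w; rewrite /fscale /sandwich /cre /cs /=.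
  rewrite !cf_cons !cf_nil; do ! case: ifP => _; ring.
Qed.

Definition ComP {n} (m : word n) (p : fsum n) :=
  weyl_eq (sandwich m p [::]) (sandwich [::] p m).

Lemma ComP_weq n (m : word n) p q : weyl_eq p q -> ComP m q -> ComP m p.
Proof.
move=> H Hq; rewrite /ComP.
apply: weq_trans (weq_sand m [::] H) _; apply: weq_trans Hq _.
exact/weq_sand/weq_sym.
Qed.
Lemma ComP_cat n (m : word n) p q : ComP m p -> ComP m q -> ComP m (p ++ q).
Proof. rewrite /ComP /sandwich !map_cat => H1 H2; exact: weq_cat. Qed.
Lemma sand_scale n (u v : word n) c p : sandwich u (fscale c p) v = fscale c (sandwich u p v).
Proof. by rewrite /sandwich/fscale -!map_comp; apply: eq_map. Qed.
Lemma ComP_scale n (m : word n) c p : ComP m p -> ComP m (fscale c p).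
Proof. rewrite /ComP !sand_scale; exact: weq_scale. Qed.
Lemma ComP_zero n (m : word n) p : ComP m (fscale 0 p).
Proof. rewrite /ComP !sand_scale; apply: weq_coef => w; by rewrite !cf_scale !mul0r. Qed.
Lemma Q_ComP n (m w : word n) : weyl_commute m w <-> ComP m [:: (1,w)].
Proof. by rewrite /ComP /sandwich /weyl_commute /= cats0. Qed.
Lemma ComP_single n (m : word n) c w : (c = 0 \/ weyl_commute m w) -> ComP m [:: (c,w)].
Proof.
move=> H; apply: (@ComP_weq _ _ _ (fscale c [:: (1,w)])).
  by rewrite /fscale /= mulr1; apply: weq_refl.
case: H => [->|/Q_ComP H]; [exact: ComP_zero | exact: ComP_scale].
Qed.
Lemma Q_swap n (m p v : word n) x y :
  weyl_commute m (p ++ y :: x :: v) -> (cs x y <> 0 -> weyl_commute m (p ++ v)) ->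
  weyl_commute m (p ++ x :: y :: v).
Proof.
move=> H1 H2; apply/Q_ComP; apply: ComP_weq (swap p v x y) _.
apply: (@ComP_cat _ m [:: _] [:: _]); first by apply/Q_ComP.
apply: ComP_single; have [->|Hc] := eqVneq (cs x y) 0; [by left|right].
by apply: H2; apply/eqP.
Qed.
Lemma Q_nil n (m : word n) : weyl_commute m [::].
Proof. rewrite /weyl_commute cats0; exact: weq_refl. Qed.
Lemma Q_cat n (m a b : word n) :
  weyl_commute m a -> weyl_commute m b -> weyl_commute m (a ++ b).
Proof.
move=> Ha Hb; have H1 := weq_sand [::] b Ha; have H2 := weq_sand a [::] Hb.
move: H1 H2; rewrite /sandwich /= !cats0 -!catA /= => H1 H2.
rewrite /weyl_commute -catA; exact: weq_trans H1 H2.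
Qed.

Definition dA {n} (j : 'I_n) (w : word n) : CC :=
  (mdeg_alpha w j)%:R - (mdeg_beta w j)%:R.

Lemma letterN n (j : 'I_n) x :
  weyl_eq [:: (1, [:: cre j; ann j; x])]
          [:: (1, [:: x; cre j; ann j]); (dA j [:: x], [:: x])].
Proof.
case: x => i.
- have S1 := swap [:: cre j] [::] (ann j) (inl i).
  have S2 := swap [::] [:: ann j] (cre j) (inl i).
  move: S1 S2; rewrite /= => S1 S2.
  apply: weq_trans S1 _.
  apply: weq_trans (weq_cat S2 (weq_refl [:: (cs (ann j) (inl i), [:: cre j])])) _.
  apply: weq_coef => w; rewrite /cs /dA /mdeg_alpha /mdeg_beta /ann /cre /=.
  have E : (@inl 'I_n 'I_n i == inl j) = (i == j) by [].
  rewrite E; case: (eqVneq i j) => [->|Hij]; rewrite ?eqxx ?(negbTE Hij) /=;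
    rewrite !cf_cons !cf_nil; do ! case: ifP => _; ring.
- have S1 := swap [:: cre j] [::] (ann j) (inr i).
  have S2 := swap [::] [:: ann j] (cre j) (inr i).
  move: S1 S2; rewrite /= => S1 S2.
  apply: weq_trans S1 _.
  apply: weq_trans (weq_cat S2 (weq_refl [:: (cs (ann j) (inr i), [:: cre j])])) _.
  apply: weq_coef => w; rewrite /cs /dA /mdeg_alpha /mdeg_beta /ann /cre /=.
  have E : (@inr 'I_n 'I_n i == inr j) = (i == j) by [].
  rewrite E; case: (eqVneq i j) => [->|Hij]; rewrite ?eqxx ?(negbTE Hij) /=;
    rewrite !cf_cons !cf_nil; do ! case: ifP => _; ring.
Qed.

Lemma NcommP n (j : 'I_n) (m : word n) :
  weyl_eq [:: (1, [:: cre j; ann j] ++ m)] [:: (1, m ++ [:: cre j; ann j]); (dA j m, m)].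
Proof.
elim: m => [|x m IH].
  apply: weq_coef => w; rewrite /dA /mdeg_alpha /mdeg_beta /=.
  rewrite !cf_cons !cf_nil; do ! case: ifP => _; ring.
have S2 := weq_sand [::] m (letterN j x).
have S3 := weq_sand [:: x] [::] IH.
move: S2 S3; rewrite /sandwich /= !cats0 => S2 S3.
apply: weq_trans S2 _.
apply: weq_trans (@weq_cat _ [:: _] _ [:: _] _ S3 (weq_refl [:: (dA j [:: x], x :: m)])) _.
apply: weq_coef => w; rewrite /dA /mdeg_alpha /mdeg_beta /= !natrD.
rewrite !cf_cons !cf_nil; do ! case: ifP => _; ring.
Qed.

Lemma QN n (j : 'I_n) (m : word n) :
  mdeg_alpha m j = mdeg_beta m j -> weyl_commute m [:: cre j; ann j].
Proof.
move=> H; apply: weq_sym; apply: weq_trans (NcommP j m) _.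
apply: weq_coef => w; rewrite /dA H subrr !cf_cons !cf_nil.
do ! case: ifP => _; ring.
Qed.

Lemma QN' n (j : 'I_n) (m : word n) :
  mdeg_alpha m j = mdeg_beta m j -> weyl_commute m [:: ann j; cre j].
Proof.
move=> H; apply: (@Q_swap _ m [::] [::]) => [|_]; [exact: QN | exact: Q_nil].
Qed.


Definition conjg {n} (g : gen n) : gen n :=
  match g with inl j => inr j | inr j => inl j end.
Definition idx {n} (g : gen n) : 'I_n := match g with inl j => j | inr j => j end.
Definition bal {n} (w : word n) := forall j, mdeg_alpha w j = mdeg_beta w j.

Lemma cs_conj n (x y : gen n) : cs x y <> 0 -> y = conjg x.
Proof.
case: x => i; case: y => j //=; case: (eqVneq i j) => [->|] //.
Qed.

Lemma conjgK n : involutive (@conjg n).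
Proof. by case. Qed.

Lemma move_left n (m : word n) g g' (u v : word n) :
  weyl_commute m (g :: g' :: u ++ v) ->
  (forall u1 x u2, u = u1 ++ x :: u2 -> cs x g' <> 0 -> weyl_commute m (g :: u1 ++ u2 ++ v)) ->
  weyl_commute m (g :: u ++ g' :: v).
Proof.
elim/last_ind: u v => [|u1 x IH] v H1 H2; first exact: H1.
rewrite cat_rcons.
apply: (@Q_swap _ m (g :: u1) v x g') => /=.
- apply: IH; first by rewrite cat_rcons in H1.
  move=> a y b Hu Hc; have := H2 a y (rcons b x).
  rewrite Hu rcons_cat rcons_cons cat_rcons; apply => //.
- move=> Hc; have := H2 u1 x [::]; rewrite cats1 /=; exact.
Qed.

Lemma pair_bal n (g : gen n) j :
  count (pred1 (cre j)) [:: g; conjg g] = count (pred1 (ann j)) [:: g; conjg g].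
Proof. by case: g => i /=; rewrite /cre /ann /=; case: (i == j). Qed.

Lemma bal_rm n (w1 w2 : word n) g :
  (forall P, count P w1 = (count P w2 + count P [:: g; conjg g])%N) -> bal w1 -> bal w2.
Proof.
move=> H Hb j; move: (Hb j); rewrite /mdeg_alpha /mdeg_beta !H pair_bal.
by move/eqP; rewrite eqn_add2r => /eqP.
Qed.

Lemma main_c n (m : word n) k : forall w : word n, (size w <= k)%N -> bal w ->
  all (fun g => mdeg_alpha m (idx g) == mdeg_beta m (idx g)) w -> weyl_commute m w.
Proof.
elim: k => [|k IHk] [|g rest] //= Hs Hb Hall; try exact: Q_nil.
case/andP: Hall => Hg Hall.
have Hin : conjg g \in rest.
  move: (Hb (idx g)); clear Hb; rewrite /mdeg_alpha /mdeg_beta /=.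
  case: g Hg => i Hg /=; rewrite /cre /ann /= eqxx /=.
  + by move=> E; rewrite -has_pred1 has_count; rewrite add0n in E; rewrite E.
  + by move=> E; rewrite -has_pred1 has_count; rewrite add0n in E; rewrite -E.
case/splitPr: Hin Hs Hb Hall => u v Hs Hb Hall.
apply: move_left.
- apply: (@Q_cat _ m [:: g; conjg g] (u ++ v)).
  + case: g Hg {Hb Hs Hall} => i /= /eqP Hg; [exact: QN' | exact: QN].
  + apply: IHk.
    * rewrite size_cat /= in Hs; rewrite size_cat; lia.
    * apply: (bal_rm (g := g)) Hb => P; rewrite /= !count_cat /=; lia.
    * by rewrite all_cat; move: Hall; rewrite all_cat /= => /andP[-> /andP[_ ->]].
- move=> u1 x u2 Hu Hc.
  have Hx : x = g by rewrite -[x]conjgK -(cs_conj Hc) conjgK.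
  subst u x.
  apply: IHk.
  + rewrite !size_cat /= in Hs; rewrite /= !size_cat; lia.
  + apply: (bal_rm (g := g)) Hb => P; rewrite /= !count_cat /=; lia.
  + move/allP: Hall => Hall; apply/allP => y; rewrite inE => /predU1P [->|Hy] //.
    apply: Hall; move: Hy; rewrite !mem_cat !inE.
    by case/orP => [->|/orP[->|->]]; rewrite ?orbT.
Qed.

Definition act1 {n} (g : gen n) (k : {ffun 'I_n -> nat}) : CC * {ffun 'I_n -> nat} :=
  match g with
  | inl i => ((k i)%:R, [ffun l => if l == i then (k l).-1 else k l])
  | inr i => (1, [ffun l => if l == i then (k l).+1 else k l]) end.
Fixpoint act {n} (w : word n) (k : {ffun 'I_n -> nat}) : CC * {ffun 'I_n -> nat} :=
  match w with
  | [::] => (1, k)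
  | g :: w' => ((act1 g (act w' k).2).1 * (act w' k).1, (act1 g (act w' k).2).2)
  end.

Lemma act_cat n (w1 w2 : word n) k :
  (act (w1 ++ w2) k).1 = (act w1 (act w2 k).2).1 * (act w2 k).1 /\
  (act (w1 ++ w2) k).2 = (act w1 (act w2 k).2).2.
Proof.
elim: w1 => [|g w1 [IH1 IH2]] /=; first by rewrite mul1r.
by rewrite IH1 IH2 mulrA.
Qed.
Lemma act_cat1 n (w1 w2 : word n) k :
  (act (w1 ++ w2) k).1 = (act w1 (act w2 k).2).1 * (act w2 k).1.
Proof. by case: (act_cat w1 w2 k). Qed.
Lemma act_cat2 n (w1 w2 : word n) k :
  (act (w1 ++ w2) k).2 = (act w1 (act w2 k).2).2.
Proof. by case: (act_cat w1 w2 k). Qed.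

Definition Psi {n} (p : fsum n) k (F : {ffun 'I_n -> nat} -> CC) :=
  \sum_(x <- p) x.1 * (act x.2 k).1 * F (act x.2 k).2.

Lemma sum_coef n (p : fsum n) (H : word n -> CC) (s : seq (word n)) :
  uniq s -> {subset map snd p <= s} ->
  \sum_(x <- p) x.1 * H x.2 = \sum_(w <- s) coef p w * H w.
Proof.
move=> Us; elim: p => [|[c u] p IH] Hsub.
  by rewrite big_nil big1 // => w _; rewrite cf_nil mul0r.
rewrite big_cons IH; last by move=> y Hy; apply: Hsub; rewrite /= inE Hy orbT.
have Hu : u \in s by apply: Hsub; rewrite /= inE eqxx.
under [in RHS]eq_bigr => w _ do rewrite cf_cons mulrDl.
rewrite big_split /=; congr (_ + _).
rewrite (bigD1_seq u) //= eqxx big1 ?addr0 // => w Hw.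
by rewrite eq_sym (negbTE Hw) mul0r.
Qed.

Lemma Psi_ext n (p q : fsum n) : coef p =1 coef q -> forall k F, Psi p k F = Psi q k F.
Proof.
move=> Hc k F; set H := fun w => (act w k).1 * F (act w k).2.
have E r : Psi r k F = \sum_(x <- r) x.1 * H x.2.
  by apply: eq_bigr => x _; rewrite /H mulrA.
set s := undup (map snd (p ++ q)).
have Us : uniq s by apply: undup_uniq.
have Sp : {subset map snd p <= s}.
  by move=> y Hy; rewrite mem_undup map_cat mem_cat Hy.
have Sq : {subset map snd q <= s}.
  by move=> y Hy; rewrite mem_undup map_cat mem_cat Hy orbT.
rewrite !E (sum_coef H Us Sp) (sum_coef H Us Sq).
by apply: eq_bigr => w _; rewrite Hc.
Qed.

Lemma Psi_rel n (r : fsum n) : weyl_rel r -> forall k G, Psi r k G = 0.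
Proof.
case=> i [j [->|[->|->]]] k G; rewrite /Psi !big_cons big_nil /= /ann /cre /=.
- rewrite ffunE; case: (eqVneq i j) => [<-|Hij].
  +
    have -> : [ffun l => if l == i
               then ([ffun l0 => if l0 == i then (k l0).+1 else k l0] l).-1
               else [ffun l0 => if l0 == i then (k l0).+1 else k l0] l] = k.
      by apply/ffunP => l; rewrite !ffunE; case: (l == i).
    case Hki: (k i) => [|a].
      by rewrite -natr1; ring.
    have -> : [ffun l => if l == i
                then ([ffun l0 => if l0 == i then (k l0).-1 else k l0] l).+1
                else [ffun l0 => if l0 == i then (k l0).-1 else k l0] l] = k.
      apply/ffunP => l; rewrite !ffunE; case: (eqVneq l i) => [->|] //.
      by rewrite ?eqxx Hki.
    by rewrite -!natr1; ring.
  +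
    have -> : [ffun l => if l == i
               then ([ffun l0 => if l0 == j then (k l0).+1 else k l0] l).-1
               else [ffun l0 => if l0 == j then (k l0).+1 else k l0] l] =
              [ffun l => if l == j
                then ([ffun l0 => if l0 == i then (k l0).-1 else k l0] l).+1
                else [ffun l0 => if l0 == i then (k l0).-1 else k l0] l].
      apply/ffunP => l; rewrite !ffunE.
      case Eli: (l == i); case Elj: (l == j) => //.
      try by move/eqP: Eli => Eli; move/eqP: Elj => Elj; rewrite -Eli -Elj eqxx in Hij.
    ring.
- case: (eqVneq i j) => [<-|Hij]; first ring.
  have Hji : (j == i) = false by rewrite eq_sym (negbTE Hij).
  have -> : [ffun l => if l == i
              then ([ffun l0 => if l0 == j then (k l0).-1 else k l0] l).-1
              else [ffun l0 => if l0 == j then (k l0).-1 else k l0] l] =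
            [ffun l => if l == j
               then ([ffun l0 => if l0 == i then (k l0).-1 else k l0] l).-1
               else [ffun l0 => if l0 == i then (k l0).-1 else k l0] l].
    apply/ffunP => l; rewrite !ffunE.
    case Eli: (l == i); case Elj: (l == j) => //.
    try by move/eqP: Eli => Eli; move/eqP: Elj => Elj; rewrite -Eli -Elj eqxx in Hij.
  rewrite !ffunE (negbTE Hij) Hji; ring.
- case: (eqVneq i j) => [<-|Hij]; first ring.
  have -> : [ffun l => if l == i
              then ([ffun l0 => if l0 == j then (k l0).+1 else k l0] l).+1
              else [ffun l0 => if l0 == j then (k l0).+1 else k l0] l] =
            [ffun l => if l == j
               then ([ffun l0 => if l0 == i then (k l0).+1 else k l0] l).+1
               else [ffun l0 => if l0 == i then (k l0).+1 else k l0] l].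
    apply/ffunP => l; rewrite !ffunE.
    case Eli: (l == i); case Elj: (l == j) => //.
    try by move/eqP: Eli => Eli; move/eqP: Elj => Elj; rewrite -Eli -Elj eqxx in Hij.
  ring.
Qed.

Lemma Psi_ideal n (p : fsum n) : in_ideal p -> forall k F, Psi p k F = 0.
Proof.
elim=> [|c u r v Hr|p' q' _ IH1 _ IH2|p' q' Hc _ IH] k F.
- by rewrite /Psi big_nil.
- have -> : Psi (fscale c (sandwich u r v)) k F =
     c * (act v k).1 * Psi r (act v k).2 (fun e => (act u e).1 * F (act u e).2).
    rewrite /Psi /fscale /sandwich -map_comp big_map big_distrr /=.
    apply: eq_bigr => x _ /=; rewrite !(act_cat1, act_cat2); ring.
  by rewrite Psi_rel // mulr0.
- have E : Psi (p' ++ q') k F = Psi p' k F + Psi q' k F by rewrite /Psi big_cat.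
  by rewrite E IH1 IH2 addr0.
- by rewrite -(Psi_ext Hc) IH.
Qed.

Lemma comm_act n (m mh : word n) : weyl_commute m mh ->
  forall k, (act (m ++ mh) k).1 = (act (mh ++ m) k).1.
Proof.
move=> H k; have := Psi_ideal H k (fun _ => 1).
rewrite /Psi /fscale /= !big_cons big_nil /= => E.
apply/eqP; rewrite -subr_eq0; apply/eqP; rewrite -E; ring.
Qed.


Definition off {n} (i : 'I_n) (w : word n) : CC :=
  (mdeg_alpha w i)%:R - (mdeg_beta w i)%:R.

Definition lin {n} (j : 'I_n) (M : nat) (g : gen n) (w : word n) : {poly CC} :=
  match g with
  | inr _ => 1
  | inl i => if i == j then 'X + (off i w)%:P else (M%:R + off i w)%:P
  end.
Fixpoint sp {n} (j : 'I_n) (M : nat) (w : word n) : {poly CC} :=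
  match w with [::] => 1 | g :: w' => lin j M g w' * sp j M w' end.

Definition kK {n} (j : 'I_n) (M K : nat) : {ffun 'I_n -> nat} :=
  [ffun l => if l == j then K else M].

Lemma mdeg_cons_a n (g : gen n) w l :
  mdeg_alpha (g :: w) l = ((g == cre l) + mdeg_alpha w l)%N.
Proof. by []. Qed.
Lemma mdeg_cons_b n (g : gen n) w l :
  mdeg_beta (g :: w) l = ((g == ann l) + mdeg_beta w l)%N.
Proof. by []. Qed.
Lemma beta_size n (w : word n) l : (mdeg_beta w l <= size w)%N.
Proof. exact: count_size. Qed.

Lemma natB_aux (a x y M : nat) : (M <= a)%N -> (y < M)%N ->
  ((a + x - y)%N%:R : CC) = a%:R + x%:R - y%:R.
Proof. move=> H1 H2; rewrite natrB ?natrD //; lia. Qed.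
Lemma nat_aux1 (a x y M : nat) : (M <= a)%N -> (y < M)%N ->
  (a + x - y).+1 = (a + (1 + x) - (0 + y))%N.
Proof. lia. Qed.
Lemma nat_aux2 (a x y : nat) : (a + x - y).-1 = (a + (0 + x) - (1 + y))%N.
Proof. lia. Qed.

Lemma act_sp n (j : 'I_n) (M K : nat) (w : word n) : (M <= K)%N -> (size w <= M)%N ->
  (act w (kK j M K)).1 = (sp j M w).[K%:R] /\
  (act w (kK j M K)).2 = [ffun l => (kK j M K l + mdeg_alpha w l - mdeg_beta w l)%N].
Proof.
move=> MK; elim: w => [|g w IH] /= Hs.
  split; first by rewrite hornerC.
  by apply/ffunP => l; rewrite !ffunE /mdeg_alpha /mdeg_beta /= addn0 subn0.
have [IH1 IH2] := IH (ltnW Hs).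
have Hk l : (M <= (if l == j then K else M))%N by case: (l == j).
have Hb l : (mdeg_beta w l < M)%N by apply: leq_ltn_trans (beta_size w l) Hs.
case: g => i /=; rewrite IH1 IH2 hornerM; split.
- rewrite /kK ffunE /off; congr (_ * _).
  have Hki := Hk i; have Hbi := Hb i.
  rewrite ffunE; case: (i == j); [rewrite (natB_aux _ MK Hbi) | rewrite (natB_aux _ (leqnn M) Hbi)].
  + by rewrite hornerD hornerX hornerC addrA.
  + by rewrite hornerC addrA.
- apply/ffunP => l; rewrite /kK !ffunE /ann /=.
  case: (eqVneq l i) => [->|Hli]; rewrite ?eqxx /=.
  + by rewrite nat_aux2.
  + have -> : (inl i == inl l :> gen n) = false by apply/eqP => -[E]; rewrite E eqxx in Hli.
    by rewrite !add0n.
- by rewrite mul1r -polyC1 hornerC mul1r.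
- apply/ffunP => l; rewrite /kK !ffunE /cre /=.
  case: (eqVneq l i) => [->|Hli]; rewrite ?eqxx /=.
  + have Hbi := Hb i; case: (i == j).
    * by rewrite (nat_aux1 _ MK Hbi).
    * by rewrite (nat_aux1 _ (leqnn M) Hbi).
  + have -> : (inr i == inr l :> gen n) = false by apply/eqP => -[E]; rewrite E eqxx in Hli.
    by rewrite !add0n.
Qed.

Fixpoint Aw {n} (j : 'I_n) (M : nat) (w : word n) : CC :=
  match w with
  | [::] => 1
  | g :: w' => (match g with inl i => if i == j then 1 else M%:R + off i w' | inr _ => 1 end)
               * Aw j M w'
  end.
Fixpoint Qw {n} (j : 'I_n) (w : word n) : {poly CC} :=
  match w with
  | [::] => 1
  | g :: w' => (match g with inl i => if i == j then 'X + (off i w')%:P else 1 | inr _ => 1 end)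
               * Qw j w'
  end.
Fixpoint Ew {n} (j : 'I_n) (w : word n) : CC :=
  match w with
  | [::] => 0
  | g :: w' => (match g with inl i => if i == j then off i w' else 0 | inr _ => 0 end)
               + Ew j w'
  end.

Lemma sp_AQ n (j : 'I_n) M w : sp j M w = (Aw j M w)%:P * Qw j w.
Proof.
elim: w => [|g w IH] /=; first by rewrite polyC1 mul1r.
rewrite IH; case: g => i /=; last by rewrite !mul1r.
case: (i == j); rewrite ?mul1r ?polyCM; ring.
Qed.

Lemma Qw_coef n (j : 'I_n) (w : word n) :
  [/\ forall i, (mdeg_beta w j < i)%N -> (Qw j w)`_i = 0,
      (Qw j w)`_(mdeg_beta w j) = 1,
      (0 < mdeg_beta w j)%N -> (Qw j w)`_(mdeg_beta w j).-1 = Ew j w &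
      mdeg_beta w j = 0%N -> Ew j w = 0].
Proof.
elim: w => [|g w [IH1 IH2 IH3 IH4]].
  split => //=; last by rewrite coef1.
  by move=> [|i] //= _; rewrite coef1.
rewrite mdeg_cons_b; case: g => i; last first.
  have -> : (inr i == ann j) = false by [].
  by rewrite add0n /= !mul1r add0r.
case: (eqVneq i j) => [->|Hij]; last first.
  have -> : (inl i == ann j) = false by apply/eqP => -[E]; rewrite E eqxx in Hij.
  by rewrite add0n /= (negbTE Hij) !mul1r add0r.
have -> : (inl j == ann j) = true by rewrite /ann eqxx.
rewrite /= eqxx add1n; set b := mdeg_beta w j in IH1 IH2 IH3 IH4 *.
split => //.
- move=> [|k] //= Hi; rewrite mulrDl coefD coefXM coefCM /=.
  by rewrite IH1 // IH1 ?mul0r ?mulr0 ?addr0 //; apply: ltnW.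
- rewrite mulrDl coefD coefXM coefCM /= IH2 IH1 ?mulr0 ?addr0 //.
- move=> _; rewrite mulrDl coefD coefXM coefCM.
  case: (posnP b) => Hb.
  + by rewrite add0n IH2 IH4 // mulr1 add0r addr0.
  + by rewrite add0n IH3 // IH2 mulr1 addrC.
Qed.

Lemma off_cat n (i : 'I_n) (w1 w2 : word n) : off i (w1 ++ w2) = off i w1 + off i w2.
Proof. rewrite /off /mdeg_alpha /mdeg_beta !count_cat !natrD; ring. Qed.

Lemma Ew_cat n (j : 'I_n) (w1 w2 : word n) :
  Ew j (w1 ++ w2) = Ew j w1 + Ew j w2 + (mdeg_beta w1 j)%:R * off j w2.
Proof.
elim: w1 => [|g w1 IH]; first by rewrite /mdeg_beta /= mul0r add0r addr0.
rewrite mdeg_cons_b cat_cons /= IH; case: g => i.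
- case: (eqVneq i j) => [->|Hij].
  + have -> : (inl j == ann j) = true by rewrite /ann eqxx.
    rewrite ?eqxx off_cat natrD /=; ring.
  + have -> : (inl i == ann j) = false by apply/eqP => -[E]; rewrite E eqxx in Hij.
    rewrite ?(negbTE Hij) /=; ring.
- have -> : (inr i == ann j) = false by [].
  rewrite /=; ring.
Qed.

Lemma Aw_neq0 n (j : 'I_n) M (w : word n) : (size w <= M)%N -> Aw j M w != 0.
Proof.
elim: w => [|g w IH] /= Hs; first exact: oner_neq0.
rewrite mulf_neq0 ?IH ?(ltnW Hs) //.
case: g => i; last exact: oner_neq0.
case: (i == j); first exact: oner_neq0.
have Hb : (mdeg_beta w i < M)%N by apply: leq_ltn_trans (beta_size w i) Hs.
rewrite /off addrA -(natB_aux _ (leqnn M) Hb) pnatr_eq0.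
apply/eqP; lia.
Qed.

Lemma key n (j : 'I_n) (m mh : word n) : weyl_commute m mh ->
  (mdeg_beta m j * mdeg_alpha mh j = mdeg_alpha m j * mdeg_beta mh j)%N.
Proof.
move=> Hc; set M := size (m ++ mh).
have HM2 : (size (mh ++ m) <= M)%N by rewrite /M !size_cat addnC.
have Hval K : (M <= K)%N ->
    (sp j M (m ++ mh)).[K%:R] = (sp j M (mh ++ m)).[K%:R].
  move=> HK; have [E1 _] := act_sp j (w:=m ++ mh) HK (leqnn _).
  have [E2 _] := act_sp j (w:=mh ++ m) HK HM2.
  by rewrite -E1 -E2 (comm_act Hc).
have Hpeq : sp j M (m ++ mh) = sp j M (mh ++ m).
  apply/eqP; rewrite -subr_eq0; apply/eqP.
  set D := _ - _.
  apply: (@roots_geq_poly_eq0 _ D [seq ((M + i)%N%:R : CC) | i <- iota 0 (size D)]).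
  - apply/allP => x /mapP [i _ ->]; rewrite /root /D hornerD hornerN Hval ?subrr //.
    exact: leq_addr.
  - rewrite map_inj_uniq ?iota_uniq // => a b /eqP; rewrite eqr_nat => /eqP.
    exact: addnI.
  - by rewrite size_map size_iota.
rewrite !sp_AQ in Hpeq.
have Hb2 : mdeg_beta (mh ++ m) j = mdeg_beta (m ++ mh) j.
  by rewrite /mdeg_beta !count_cat addnC.
have [_ C1 C1' _] := Qw_coef j (m ++ mh).
have [_ C2 C2' _] := Qw_coef j (mh ++ m).
rewrite Hb2 in C2 C2'.
case: (posnP (mdeg_beta (m ++ mh) j)) => Hb0.
  move: Hb0; rewrite /mdeg_beta count_cat => /eqP; rewrite addn_eq0.
  by case/andP => /eqP -> /eqP ->; rewrite mul0n muln0.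
have HA : Aw j M (m ++ mh) = Aw j M (mh ++ m).
  by move: (congr1 (fun p : {poly CC} => p`_(mdeg_beta (m ++ mh) j)) Hpeq); rewrite /= !coefCM C1 C2 !mulr1.
have HE : Ew j (m ++ mh) = Ew j (mh ++ m).
  move: (congr1 (fun p : {poly CC} => p`_(mdeg_beta (m ++ mh) j).-1) Hpeq).
  rewrite /= !coefCM C1' // C2' // HA; apply: mulfI; exact: Aw_neq0.
rewrite !Ew_cat in HE.
have H' : (mdeg_beta m j)%:R * (mdeg_alpha mh j)%:R - (mdeg_alpha m j)%:R * (mdeg_beta mh j)%:R
   = (Ew j m + Ew j mh + (mdeg_beta m j)%:R * off j mh)
     - (Ew j mh + Ew j m + (mdeg_beta mh j)%:R * off j m) :> CC.
  rewrite /off; ring.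
rewrite HE subrr in H'.
by move/eqP: H'; rewrite subr_eq0 -!natrM eqr_nat => /eqP.
Qed.

Local Close Scope ring_scope.

Lemma cancel_aux (a b c : nat) : (b * a = c * a)%N -> a <> 0%N -> c = b.
Proof.
move=> E Ha; have Hp : (0 < a)%N by rewrite lt0n; apply/eqP.
by move/eqP: E; rewrite eqn_pmul2r // eq_sym => /eqP.
Qed.

Lemma partB2 n (m mh : word n) : (forall j, mdeg_alpha mh j = mdeg_beta mh j) ->
  weyl_commute m mh -> forall j, mdeg_alpha mh j <> 0%N -> mdeg_alpha m j = mdeg_beta m j.
Proof.
move=> Hb Hc j Hj; have E := key j Hc.
rewrite -Hb in E; exact: cancel_aux E Hj.
Qed.

Theorem corollary1 :
  (* (a) n = 1 *)
  (forall m mh : word 1,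
     let r := mdeg_alpha m ord0 in let s := mdeg_beta m ord0 in
     let rh := mdeg_alpha mh ord0 in let sh := mdeg_beta mh ord0 in
     (weyl_commute m mh -> s * rh = r * sh)
     /\ (rh = sh -> rh <> 0 -> weyl_commute m mh -> r = s))
  /\
  (* (b) general n >= 1 *)
  (forall (n : nat), 0 < n -> forall m mh : word n,
     (weyl_commute m mh ->
        forall j : 'I_n, mdeg_beta m j * mdeg_alpha mh j = mdeg_alpha m j * mdeg_beta mh j)
     /\ ((forall j : 'I_n, mdeg_alpha mh j = mdeg_beta mh j) -> weyl_commute m mh ->
        forall j : 'I_n, mdeg_alpha mh j <> 0 -> mdeg_alpha m j = mdeg_beta m j))
  /\
  (* (c) *)
  (forall (n : nat), 0 < n -> forall m mt : word n,
     (forall j : 'I_n, mdeg_alpha mt j = mdeg_beta mt j) ->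
     (weyl_commute m mt <->
        forall j : 'I_n, mdeg_alpha mt j <> 0 -> mdeg_alpha m j = mdeg_beta m j)).
Proof.
split; [|split].
- move=> m mh r s rh sh; split.
  + by move=> Hc; exact: (key ord0 Hc).
  + move=> E Hn Hc; have K := key ord0 Hc.
    change (s * rh = r * sh)%N in K; rewrite -E in K.
    exact: (cancel_aux K Hn).
- move=> n _ m mh; split; [by move=> Hc j; exact: key | exact: partB2].
- move=> n _ m mt Hbal; split; first by move=> Hc j Hj; exact: partB2 Hbal Hc j Hj.
  move=> H; apply: (@main_c _ m (size mt)) => //.
  apply/allP => g Hg; apply/eqP; apply: H.
  case: g Hg => i Hg /=; apply/eqP; rewrite -lt0n; last first.
    by rewrite /mdeg_alpha -has_count has_pred1.
  by rewrite Hbal /mdeg_beta -has_count has_pred1.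
Qed.
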